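(* Let $C\subset\mathbb{R}^d$ be a convex body and $\mu$ a non-$C$-degenerate measure with $\mu(C)>0$ and $\mu(\mathbb{R}^d)=\infty$. Let $B\subset\mathbb{R}^d$ be a Euclidean ball with $\mu(B)\ge\mu(C)$, and let $C'$ be a homothet of $C$ such that $\mu(C'\cap B)<\mu(C)$ but $C'\not\subset B$. Then $C'\cap B$ can be covered by a finite collection of homothets of $C$, each of $\mu$-measure at most $\mu(C)$, none of which is fully contained in $B$.
   Context: A convex body is a convex compact set with nonempty interior; a homothet of $C$ is $\lambda C+x$ with $\lambda>0$, $x\in\mathbb{R}^d$. Measures are Borel measures on $\mathbb{R}^d$ finite on compact sets; $\mu$ is non-$C$-degenerate if it vanishes on the boundary of every homothet of $C$. *)

(* Defs.v *)
(* R^d is modelled as 'rV[R]_d (product topology =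
   Euclidean topology); Borel sets = sigma-algebra generated by open sets. *)
From HB Require Import structures.
From mathcomp Require Import all_boot all_order all_algebra.
From mathcomp Require Import all_classical all_reals all_analysis.
Set Implicit Arguments. Unset Strict Implicit. Unset Printing Implicit Defensive.
Import Order.TTheory GRing.Theory Num.Theory.
Import numFieldTopology.Exports numFieldNormedType.Exports.
Local Open Scope classical_set_scope.
Local Open Scope ring_scope.

Definition borelRd (R : realType) (d : nat) :=
  g_sigma_algebraType (@open 'rV[R]_d).

Definition convex_set (R : realType) (d : nat) (C : set 'rV[R]_d) : Prop :=
  forall x y t, C x -> C y -> 0 <= t -> t <= 1 -> C (t *: x + (1 - t) *: y).

Definition convex_body (R : realType) (d : nat) (C : set 'rV[R]_d) : Prop :=
  [/\ convex_set C, compact C & (interior C !=set0)].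

Definition homothet (R : realType) (d : nat) (C : set 'rV[R]_d)
    (lam : R) (x : 'rV[R]_d) : set 'rV[R]_d :=
  [set lam *: c + x | c in C].

Definition is_homothet (R : realType) (d : nat) (C K : set 'rV[R]_d) : Prop :=
  exists lam x, 0 < lam /\ K = homothet C lam x.

Definition boundary (R : realType) (d : nat) (A : set 'rV[R]_d) : set 'rV[R]_d :=
  closure A `\` interior A.

Definition euclid_ball (R : realType) (d : nat) (c : 'rV[R]_d) (r : R)
    : set 'rV[R]_d :=
  [set x | \sum_(i < d) (x ord0 i - c ord0 i) ^+ 2 <= r ^+ 2].

Definition is_euclid_ball (R : realType) (d : nat) (B : set 'rV[R]_d) : Prop :=
  exists c r, 0 < r /\ B = euclid_ball c r.

Definition locally_finite_measure (R : realType) (d : nat)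
    (mu : {measure set (borelRd R d) -> \bar R}) : Prop :=
  forall K : set 'rV[R]_d, compact K -> (mu K < +oo)%E.

Definition non_degenerate (R : realType) (d : nat) (C : set 'rV[R]_d)
    (mu : {measure set (borelRd R d) -> \bar R}) : Prop :=
  forall lam x, 0 < lam -> mu (boundary (homothet C lam x)) = 0%E.

(* Main.v *)
Require Import Defs.
From HB Require Import structures.
From mathcomp Require Import all_boot all_order all_algebra.
From mathcomp Require Import all_classical all_reals all_analysis.
From mathcomp Require Import ring lra.
Import Order.TTheory GRing.Theory Num.Theory.
Import numFieldTopology.Exports numFieldNormedType.Exports.
Local Open Scope classical_set_scope.
Local Open Scope ring_scope.

Section H.
Variables (R : realType) (d : nat).
Implicit Types (K : set 'rV[R]_d).

Lemma H_comp K l x t b :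
  homothet (homothet K l x) t b = homothet K (t * l) (t *: x + b).
Proof.
apply/seteqP; split => z.
- case=> _ [c Kc <-] <-; exists c => //.
  by rewrite scalerDr scalerA addrA.
- case=> c Kc <-; exists (l *: c + x); first by exists c.
  by rewrite scalerDr scalerA addrA.
Qed.

Lemma H_one K : homothet K 1 0 = K.
Proof.
apply/seteqP; split => z.
- by case=> c Kc <-; rewrite scale1r addr0.
- by move=> Kz; exists z => //; rewrite scale1r addr0.
Qed.

Lemma H_convex K l x : Defs.convex_set K -> Defs.convex_set (homothet K l x).
Proof.
move=> cK _ _ t [a Ka <-] [b Kb <-] t0 t1.
exists (t *: a + (1 - t) *: b); first exact: cK.
rewrite !scalerDr !scalerA (mulrC l) (mulrC l) -!scalerA.
rewrite -[in RHS]addrA [in RHS](addrCA (t *: x)) [in RHS]addrA.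
by rewrite -scalerDl [t + _]addrC subrK scale1r.
Qed.

Lemma H_compact K l x : compact K -> compact (homothet K l x).
Proof.
move=> cK; apply: continuous_compact => //.
apply: continuous_subspaceT => y.
apply: continuousD; last exact: cst_continuous.
exact: scaler_continuous.
Qed.

Lemma H_sub K a s t : Defs.convex_set K -> K a -> 0 <= s -> s <= t -> 0 < t ->
  homothet K s ((1 - s) *: a) `<=` homothet K t ((1 - t) *: a).
Proof.
move=> cK Ka s0 st t0 _ [k Kk <-].
exists ((s / t) *: k + (1 - s / t) *: a).
  apply: cK => //; first by rewrite divr_ge0 // ltW.
  by rewrite ler_pdivrMr // mul1r.
rewrite scalerDr !scalerA mulrBr mulr1 mulrCA divff ?gt_eqF // mulr1.
rewrite -addrA -scalerDl; congr (_ + _ *: a).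
by rewrite addrC addrA subrK.
Qed.

End H.
Section T.
Variables (R : realType) (d : nat).

Lemma closed_meas (A : set 'rV[R]_d) : closed A ->
  measurable (A : set (borelRd R d)).
Proof.
move=> cA; rewrite -(setCK A); apply: measurableC.
apply: sub_sigma_algebra; exact: closed_openC.
Qed.

Lemma closure_crit (A : set 'rV[R]_d) z : closed A ->
  (forall e, 0 < e -> exists w, A w /\ `|z - w| < e) -> A z.
Proof.
move=> cA H; rewrite (closure_id A).1 //.
move=> U /nbhs_ballP [e /= e0 eU].
have [w [Aw zw]] := H e e0.
exists w; split => //; apply: eU; by rewrite -ball_normE /=.
Qed.

Lemma coord_le (v : 'rV[R]_d) i : `|v ord0 i| <= `|v|.
Proof.
have -> : `|v| = mx_norm v by [].
rewrite mx_normrE.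
exact: (le_bigmax _ (fun ij : 'I_1 * 'I_d => `|v ij.1 ij.2|) (ord0, i)).
Qed.

Lemma compact_bnd (A : set 'rV[R]_d) : compact A ->
  exists M, 0 < M /\ forall x, A x -> `|x| <= M.
Proof.
move=> /compact_bounded [M [Mr HM]].
exists (`|M| + 1); split; first by rewrite ltr_wpDl.
apply: HM; rewrite (le_lt_trans (real_ler_norm Mr)) //.
by rewrite ltrDl.
Qed.

Lemma sum_cont (g : 'I_d -> 'rV[R]_d -> R) (s : seq 'I_d) :
  (forall i, continuous (g i)) -> continuous (fun x => \sum_(i <- s) g i x).
Proof.
move=> gc; elim: s => [|i s IH] /=.
  under eq_fun do rewrite big_nil; exact: cst_continuous.
under eq_fun do rewrite big_cons.
move=> x; apply: continuousD; [exact: gc | exact: IH].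
Qed.

Lemma ball_closed (c : 'rV[R]_d) r : closed (euclid_ball c r).
Proof.
have -> : euclid_ball c r = (fun x : 'rV[R]_d => \sum_(i < d) (x ord0 i - c ord0 i) ^+ 2) @^-1` [set y | y <= r ^+ 2] by [].
apply: preimage_closed; last exact: closed_le.
move=> x _; apply: sum_cont => i y.
rewrite /GRing.exp /=.
have h : continuous (fun x0 : 'rV[R]_d => x0 ord0 i - c ord0 i).
  move=> z; apply: (@continuousB _ _ _ (fun x0 : 'rV[R]_d => x0 ord0 i) (fun=> c ord0 i)).
    exact: coord_continuous.
  exact: cst_continuous.
exact: (continuousM (h y) (h y)).
Qed.

Lemma ev_lt (mu : {measure set (borelRd R d) -> \bar R})
  (F : nat -> set (borelRd R d)) (a : R) :
  (mu (F 0%N) < +oo)%E -> (forall n, measurable (F n)) ->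
  (forall n m, (n <= m)%N -> F m `<=` F n) ->
  (mu (\bigcap_n F n) < a%:E)%E -> exists n, (mu (F n) < a%:E)%E.
Proof.
move=> h0 hm hmono hl.
have hmono' : {homo F : n m / (n <= m)%N >-> (m <= n)%O}.
  by move=> n m nm; apply/subsetPset; exact: hmono.
have cv := nonincreasing_cvg_mu h0 hm (bigcapT_measurable hm) hmono'.
have lfin : mu (\bigcap_n F n) \is a fin_num.
  rewrite ge0_fin_numE ?measure_ge0 //.
  apply: le_lt_trans h0; apply: le_measure; rewrite ?inE //.
    exact: bigcapT_measurable.
  exact: bigcap_inf.
move: cv hl; rewrite -(fineK lfin) => cv hl.
have hl' : fine (mu (\bigcap_n F n)) < (fun=> a) (fine (mu (\bigcap_n F n))).
  by rewrite -lte_fin.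
have [N _ HN] := cv _ (nbhs_open_ereal_lt hl').
exists N; exact: (HN N (leqnn N)).
Qed.

End T.

Section S.
Variables (R : realType) (d : nat).

Lemma step (mu : {measure set (borelRd R d) -> \bar R}) (K B : set 'rV[R]_d)
  (p : 'rV[R]_d) (e : R) :
  Defs.convex_set K -> compact K -> closed B -> K p -> B p -> ~ (K `<=` B) ->
  (mu K < +oo)%E -> 0 < e ->
  exists t, [/\ 0 < t, t <= 1, ~ (homothet K t ((1 - t) *: p) `<=` B) &
    (mu (homothet K t ((1 - t) *: p) `\` B) < e%:E)%E].
Proof.
move=> cvK cpK clB Kp Bp KB muK e0.
pose G t := homothet K t ((1 - t) *: p).
have G0 : G 0 `<=` B.
  by move=> _ [k Kk <-]; rewrite scale0r add0r subr0 scale1r.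
have G1 : G 1 = K by rewrite /G subrr scale0r H_one.
pose T := [set t : R | 0 <= t <= 1 /\ ~ (G t `<=` B)].
have T1 : T 1 by split; [rewrite lexx ler01 | rewrite G1].
have Tlb : lbound T 0 by move=> t [/andP[]].
have Tne : T !=set0 by exists 1.
have hinf : has_inf T by split => //; exists 0.
pose ts := inf T.
have ts0 : 0 <= ts by exact: lb_le_inf.
have ts1 : ts <= 1 by apply: ge_inf => //; exists 0.
have Tpos : forall t, T t -> 0 < t.
  move=> t [/andP[t0 t1] Gt]; rewrite lt_neqAle t0 andbT.
  by apply/eqP => t00; apply: Gt; rewrite -t00.
pose tn (n : nat) := Num.min 1 (ts + n.+1%:R^-1).
have dpos : forall n : nat, 0 < n.+1%:R^-1 :> R by move=> n; rewrite invr_gt0.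
have tn1 : forall n, tn n <= 1 by move=> n; rewrite ge_min lexx.
have tnts : forall n, tn n <= ts + n.+1%:R^-1 by move=> n; rewrite ge_min lexx orbT.
have tsn : forall n, ts <= tn n.
  by move=> n; rewrite le_min ts1 /= lerDl ltW.
have tnT : forall n, 0 < tn n /\ ~ (G (tn n) `<=` B).
  move=> n; have [t Tt tlt] := inf_adherent (dpos n) hinf.
  have tp := Tpos t Tt.
  have ttn : t <= tn n by rewrite le_min (ltW tlt); case: Tt => /andP[_ ->].
  have tnp : 0 < tn n by exact: lt_le_trans ttn.
  split => // sub; case: Tt => _; apply.
  apply: subset_trans sub; apply: H_sub => //; exact: ltW.
have Gsub : forall s t, 0 <= s -> s <= t -> 0 < t -> G s `<=` G t.
  by move=> s t s0 st t0; apply: H_sub.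
pose F n := G (tn n) `\` B.
have Gcl : forall t, closed (G t).
  by move=> t; apply: compact_closed; [exact: norm_hausdorff | exact: H_compact].
have Fm : forall n, measurable (F n : set (borelRd R d)).
  move=> n; apply: measurableD; apply: closed_meas => //.
have Fmono : forall n m, (n <= m)%N -> F m `<=` F n.
  move=> n m nm z [Gz nBz]; split => //; move: z Gz {nBz}.
  apply: Gsub; [exact: ltW (tnT m).1 | | exact: (tnT n).1].
  rewrite le_min tn1 /=; apply: le_trans (tnts m) _.
  rewrite lerD2l lef_pV2 ?posrE ?ltr0n // ler_nat; exact: nm.
have F0 : (mu (F 0%N) < +oo)%E.
  apply: le_lt_trans muK; apply: le_measure; rewrite ?inE.
  - exact: Fm.
  - by apply: closed_meas; exact: compact_closed (@norm_hausdorff _ _) cpK.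
  - move=> z [Gz _]; rewrite -G1; move: z Gz; apply: Gsub => //.
    exact: ltW (tnT 0%N).1.
have [M [M0 HM]] := @compact_bnd _ _ _ cpK.
have Fcap : \bigcap_n F n = set0.
  apply/seteqP; split => // z Fz; exfalso.
  have nBz : ~ B z by case: (Fz 0%N I).
  apply: nBz; apply: closure_crit => // eps eps0.
  pose n := Num.trunc (4 * M / eps).
  have hn := truncnS_gt (4 * M / eps).
  have [[k Kk zk] _] := Fz n I.
  pose del := n.+1%:R^-1 : R.
  have del0 : 0 < del by exact: dpos.
  have Mdel : 4 * M * del < eps.
    rewrite /del ltr_pdivrMr ?ltr0n // mulrC -ltr_pdivrMl //.
    by rewrite (_ : eps^-1 * (M * 4) = 4 * M / eps) //; ring.
  pose s := Num.max 0 (ts - del).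
  have s0 : 0 <= s by rewrite le_max lexx.
  have sts : s <= ts by rewrite ge_max ts0 /= gerBl ltW.
  have ss : ts - del <= s by rewrite le_max lexx orbT.
  have nTs : ~ T s.
    move=> Ts; have := Tpos s Ts; move: Ts.
    have [sd|sd] := leP (ts - del) 0.
      have -> : s = 0 by apply/eqP; rewrite eq_le s0 ge_max lexx sd.
      by rewrite ltxx.
    have -> : s = ts - del by apply/eqP; rewrite eq_le ss ge_max (ltW sd) lexx.
    move=> Ts _; have h := ge_inf hinf.2 Ts.
    have h2 : ts - del < ts by rewrite gtrBl.
    by move: h2; rewrite ltNge h.
  have GsB : G s `<=` B.
    apply: contrapT => nG; apply: nTs; split => //.
    by rewrite s0 (le_trans sts ts1).
  exists (s *: k + (1 - s) *: p); split.
    by apply: GsB; exists k.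
  rewrite -zk.
  have -> : tn n *: k + (1 - tn n) *: p - (s *: k + (1 - s) *: p) =
            (tn n - s) *: (k - p).
    rewrite opprD addrACA -!scalerBl.
    have -> : 1 - tn n - (1 - s) = - (tn n - s) by ring.
    by rewrite scaleNr -scalerBr.
  rewrite normrZ.
  have hkp : `|k - p| <= 2 * M.
    apply: le_trans (ler_normB _ _) _; rewrite mulr2n mulrDl mul1r.
    by apply: lerD; apply: HM.
  have htn : `|tn n - s| <= 2 * del.
    rewrite ger0_norm; last by rewrite subr_ge0 (le_trans sts (tsn n)).
    have := tnts n; rewrite -/del => h1; lra.
  apply: le_lt_trans Mdel.
  apply: le_trans (ler_pM _ _ htn hkp) _ => //.
  by rewrite (_ : 2 * del * (2 * M) = 4 * M * del) //; ring.
have := @ev_lt _ _ mu F e F0 Fm Fmono (_ : mu (\bigcap_n F n) < e%:E)%E.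
rewrite Fcap measure0 lte_fin => /(_ e0) [n Fn].
exists (tn n); split => //; [exact: (tnT n).1 | exact: (tnT n).2].
Qed.

End S.

Theorem mainTheorem16 (R : realType) (d : nat) (C : set 'rV[R]_d)
    (mu : {measure set (borelRd R d) -> \bar R})
    (B C' : set 'rV[R]_d) :
  convex_body C ->
  locally_finite_measure mu ->
  non_degenerate C mu ->
  (0 < mu C)%E ->
  mu setT = +oo%E ->
  is_euclid_ball B ->
  (mu C <= mu B)%E ->
  is_homothet C C' ->
  (mu (C' `&` B) < mu C)%E ->
  ~ (C' `<=` B) ->
  exists (n : nat) (lam : 'I_n -> R) (x : 'I_n -> 'rV[R]_d),
    [/\ forall i, 0 < lam i,
        forall i, (mu (homothet C (lam i) (x i)) <= mu C)%E,
        forall i, ~ (homothet C (lam i) (x i) `<=` B) &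
        C' `&` B `<=` \bigcup_(i in [set: 'I_n]) homothet C (lam i) (x i)].
Proof.
move=> [cvC cpC [c1 Hc1]] lf _ muC0 _ [c [r0 [r00 hB]]] _ [lam0 [x0 [lam00 ->]]] hlt nsub.
set C1 := homothet C lam0 x0.
have cvC1 : Defs.convex_set C1 by exact: H_convex.
have cpC1 : compact C1 by exact: H_compact.
have hs := @norm_hausdorff R 'rV[R]_d.
have clC1 : closed C1 by exact: compact_closed.
have clB : closed B by rewrite hB; exact: ball_closed.
have muCfin : mu C \is a fin_num.
  by rewrite ge0_fin_numE ?measure_ge0 //; exact: lf.
move: Hc1; rewrite /interior /= => /nbhs_ballP [e /= e0 eC].
pose c0 := lam0 *: c1 + x0.
pose rho := lam0 * e.
have rho0 : 0 < rho by exact: mulr_gt0.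
have ballC1 : forall y, `|y| < rho -> C1 (c0 + y).
  move=> y hy; exists (c1 + lam0^-1 *: y).
    apply: eC; rewrite -ball_normE /= opprD addrA subrr add0r normrN normrZ.
    rewrite ger0_norm ?invr_ge0 ?ltW // -ltr_pdivlMl // /rho.
    by rewrite invrK.
    by rewrite invr_gt0.
  apply/(@rowP R d) => i; rewrite !mxE; field; exact: lt0r_neq0.
have C1c0 : C1 c0 by rewrite -[c0]addr0; apply: ballC1; rewrite normr0.
pose del (n : nat) := n.+1%:R^-1 : R.
have del0 : forall n, 0 < del n by move=> n; rewrite invr_gt0.
pose Cpp n := homothet C1 (1 + del n) ((1 - (1 + del n)) *: c0).
have C1Cpp : forall n, C1 `<=` Cpp n.
  move=> n; have := @H_sub _ _ C1 c0 1 (1 + del n) cvC1 C1c0 ler01.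
  rewrite subrr scale0r H_one; apply.
    by rewrite lerDl ltW.
  by rewrite ltr_wpDr // ltW.
have cpCpp : forall n, compact (Cpp n) by move=> n; exact: H_compact.
pose F n := Cpp n `&` B.
have Fm : forall n, measurable (F n : set (borelRd R d)).
  move=> n; apply: closed_meas; apply: closedI => //; exact: compact_closed.
have Fmono : forall n m, (n <= m)%N -> F m `<=` F n.
  move=> n m nm z [Cz Bz]; split => //.
  have sub : Cpp m `<=` Cpp n; last exact: sub.
  apply: H_sub => //; last by rewrite ltr_wpDr // ltW.
    by rewrite addr_ge0 // ltW.
  rewrite lerD2l lef_pV2 ?posrE ?ltr0n // ler_nat; exact: nm.
have F0 : (mu (F 0%N) < +oo)%E.
  apply: lf; apply: compact_closedI => //.
have [M [M0 HM]] := @compact_bnd _ _ _ cpC1.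
have Fcap : \bigcap_n F n `<=` C1 `&` B.
  move=> z Fz; split; last by case: (Fz 0%N I).
  apply: closure_crit => // eps eps0.
  pose n := Num.trunc (2 * M / eps).
  have hn := truncnS_gt (2 * M / eps).
  have [[k Kk zk] _] := Fz n I.
  exists k; split => //.
  have -> : z - k = del n *: (k - c0).
    rewrite -zk; apply/(@rowP R d) => i; rewrite !mxE; ring.
  rewrite normrZ ger0_norm ?ltW //.
  have hkp : `|k - c0| <= 2 * M.
    apply: le_trans (ler_normB _ _) _; rewrite mulr2n mulrDl mul1r.
    by apply: lerD; apply: HM.
  apply: le_lt_trans (ler_wpM2l (ltW (del0 n)) hkp) _.
  rewrite /del mulrC ltr_pdivrMr ?ltr0n // mulrC -ltr_pdivrMl //.
  by rewrite (_ : eps^-1 * (M * 2) = 2 * M / eps) //; ring.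
have hcap : (mu (\bigcap_n F n) < (fine (mu C))%:E)%E.
  rewrite fineK //; apply: le_lt_trans hlt; apply: le_measure; rewrite ?inE //.
    exact: bigcapT_measurable.
  by apply: closed_meas; apply: closedI.
have [N FN] := @ev_lt _ _ mu F (fine (mu C)) F0 Fm Fmono hcap.
rewrite fineK // in FN.
pose K := Cpp N.
have cvK : Defs.convex_set K by exact: H_convex.
have KB : ~ (K `<=` B) by move=> h; apply: nsub; exact: subset_trans (C1Cpp N) h.
have muK : (mu K < +oo)%E by exact: lf _ (cpCpp N).
pose m := mu (K `&` B).
have mfin : m \is a fin_num.
  by rewrite ge0_fin_numE ?measure_ge0 //; apply: (lt_le_trans FN); rewrite leey.
pose eps := fine (mu C) - fine m.
have eps0 : 0 < eps by rewrite subr_gt0 -lte_fin !fineK.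
pose r := del N * rho.
have rpos : 0 < r by exact: mulr_gt0.
have Pex : forall p, exists t : R, (C1 `&` B) p ->
   [/\ 0 < t, t <= 1, ~ (homothet K t ((1 - t) *: p) `<=` B),
       (mu (homothet K t ((1 - t) *: p)) <= mu C)%E &
       ball p (t * r) `<=` homothet K t ((1 - t) *: p)].
  move=> p; have [[C1p Bp]|np] := pselect ((C1 `&` B) p); last first.
    by exists 0 => h.
  have [t [t0 t1 nGB muGB]] := @step R d mu K B p eps cvK (cpCpp N) clB (C1Cpp N p C1p) Bp KB muK eps0.
  exists t => _; split => //.
  - have GK : homothet K t ((1 - t) *: p) `<=` K.
      have := @H_sub _ _ K p t 1 cvK (C1Cpp N p C1p) (ltW t0) t1 ltr01.
      by rewrite subrr scale0r H_one.
    have hGm : measurable (homothet K t ((1 - t) *: p) : set (borelRd R d)).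
      by apply: closed_meas; apply: compact_closed => //; apply: H_compact; exact: cpCpp.
    have hBm := @closed_meas R d B clB.
    have hb : (mu (homothet K t ((1 - t) *: p) `&` B) <= m)%E.
      apply: le_measure; rewrite ?inE.
      - exact: measurableI.
      - exact: (Fm N).
      - by move=> z [Gz Bz]; split => //; exact: GK.
    rewrite (measureDI mu hGm hBm).
    rewrite -(fineK muCfin) (_ : fine (mu C) = eps + fine m); last by rewrite /eps subrK.
    rewrite EFinD fineK //; apply: ltW; apply: lte_leD => //.
    rewrite ge0_fin_numE ?measure_ge0 //; apply: le_lt_trans hb _.
    by rewrite -ge0_fin_numE ?measure_ge0.
  - move=> z; rewrite -ball_normE /= => hz.
    pose y := t^-1 *: (z - p).
    have hy : `|(del N)^-1 *: y| < rho.
      rewrite /y normrZ normrZ distrC !ger0_norm ?invr_ge0 ?ltW //.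
      rewrite mulrA -invfM ltr_pdivrMl ?mulr_gt0 //.
      by rewrite (_ : del N * t * rho = t * r) //; rewrite /r; ring.
    have C1y := ballC1 _ hy.
    pose k' := (1 + del N)^-1 *: p + (1 - (1 + del N)^-1) *: (c0 + (del N)^-1 *: y).
    have Ck' : C1 k' by apply: cvC1 => //; [rewrite invr_ge0 addr_ge0 // ltW | rewrite invf_le1 ?lerDl ?ltW // ltr_wpDr // ltW].
    exists (p + y).
      exists k' => //.
      have hd := del0 N.
      rewrite /k' /y; apply/(@rowP R d) => i; rewrite !mxE; field.
      by rewrite !lt0r_neq0 // ?ltr_wpDr // ltW.
    rewrite /y; apply/(@rowP R d) => i; rewrite !mxE; field; exact: lt0r_neq0.
have [tf Htf] := choice Pex.
have cpCB : compact (C1 `&` B) by exact: compact_closedI.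
move: (cpCB); rewrite compact_cover => /(_ _ (C1 `&` B) (fun p => ball p (tf p * r))).
case.
- by move=> p _; exact: ball_open.
- move=> p hp; exists p => //; apply: ballxx; apply: mulr_gt0 => //.
  by case: (Htf p hp).
move=> D' D'sub cov.
pose s := finmap.enum_fset D'.
pose a := 1 + del N.
pose b := (1 - a) *: c0.
pose si (i : 'I_(size s)) := nth 0 s i.
exists (size s), (fun i => tf (si i) * (a * lam0)),
  (fun i => tf (si i) *: (a *: x0 + b) + (1 - tf (si i)) *: si i).
have Hsi : forall i : 'I_(size s), (C1 `&` B) (si i).
  move=> i; have h : si i \in C1 `&` B by apply: D'sub; rewrite /si; exact: mem_nth.
  by rewrite inE in h.
have Heq : forall p, homothet K (tf p) ((1 - tf p) *: p) =
    homothet C (tf p * (a * lam0)) (tf p *: (a *: x0 + b) + (1 - tf p) *: p).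
  move=> p; rewrite /K /Cpp !H_comp; congr (homothet _ _ _); [rewrite /a; ring | apply/(@rowP R d) => i; rewrite !mxE /a /b; ring].
split.
- move=> i; have [t0 _ _ _ _] := Htf _ (Hsi i).
  by apply: mulr_gt0 => //; apply: mulr_gt0 => //; rewrite ltr_wpDr // ltW.
- move=> i; have [_ _ _ h _] := Htf _ (Hsi i); by rewrite -Heq.
- move=> i; have [_ _ h _ _] := Htf _ (Hsi i); by rewrite -Heq.
- move=> z hz; have [p pD zp] := cov z hz.
  have pin : p \in s by exact: pD.
  have ip : (index p s < size s)%N by rewrite index_mem.
  exists (Ordinal ip) => //=.
  have hp : (C1 `&` B) p by have := D'sub p pin; rewrite inE.
  have sp : si (Ordinal ip) = p by rewrite /si /= nth_index.
  rewrite sp -Heq; have [_ _ _ _ h] := Htf p hp; exact: h.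
Qed.
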